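(* Under the setting of the context, suppose $\lambda\mapsto q_\lambda$ is differentiable at $\lambda=0$, $f_0,f_1$ are continuous at $q_0$, and $p_0f_0(q_0)+p_1f_1(q_0)>0$. Then $$\frac{dq_\lambda}{d\lambda}\Big|_{\lambda=0}=\frac{p_1f_1(q_0)}{p_0f_0(q_0)+p_1f_1(q_0)}.$$
   Context: $(X,Y)$ is a random pair on $\mathcal{X}\times[C]$. A classifier gives predicted class $\hat y(x)\in[C]$; a map $g:[C]\to[G]$ partitions classes into groups; $d(y,y'):=\mathbb{I}\{g(y)\ne g(y')\}$. For a score $s(x,y)$ and $\lambda\ge0$, $s_\lambda(x,y):=s(x,y)+\lambda d(y,\hat y(x))$. $\mathcal{Y}_0(x):=\{y: d(y,\hat y(x))=0\}$, $\mathcal{Y}_1(x):=\{y:d(y,\hat y(x))\ne0\}$; $p_0:=\mathbb{P}(Y\in\mathcal{Y}_0(X))\in(0,1)$, $p_1:=1-p_0$; $F_z(t):=\mathbb{P}(s(X,Y)\le t\mid Y\in\mathcal{Y}_z(X))$ for $z\in\{0,1\}$, assumed absolutely continuous with density $f_z=F_z'$. For small $\lambda\ge 0$, $q_\lambda$ satisfies $\mathbb{P}(s_\lambda(X,Y)\le q_\lambda)=1-\alpha$ for a fixed $\alpha\in(0,1)$. *)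

(* Defs.v *)
From HB Require Import structures.
From mathcomp Require Import all_boot all_order all_algebra.
From mathcomp Require Import all_classical all_reals all_analysis.
Set Implicit Arguments. Unset Strict Implicit. Unset Printing Implicit Defensive.
Import Order.TTheory GRing.Theory Num.Theory.
Import numFieldNormedType.Exports.
Local Open Scope classical_set_scope.
Local Open Scope ring_scope.

Section Conformal.
Context {R : realType} {d dX : measure_display}
  {Omega : measurableType d} {Xt : measurableType dX} {C G : nat}.

Definition gdist (g : 'I_C -> 'I_G) (y y' : 'I_C) : R :=
  if g y != g y' then 1 else 0.

Definition slam (s : Xt -> 'I_C -> R) (yhat : Xt -> 'I_C) (g : 'I_C -> 'I_G)
  (lam : R) (x : Xt) (y : 'I_C) : R :=
  s x y + lam * gdist g y (yhat x).

(* the event {Y in Y_z(X)} : z = false for Y_0 (same group), true for Y_1 *)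
Definition evY' (X : Omega -> Xt) (Y : Omega -> 'I_C) (yhat : Xt -> 'I_C)
  (g : 'I_C -> 'I_G) (z : bool) : set Omega :=
  [set w | ((gdist g (Y w) (yhat (X w)) : R) != 0) = z].

Definition pz (P : probability Omega R) X Y yhat g (z : bool) : R :=
  fine (P (evY' X Y yhat g z)).

Definition Fz (P : probability Omega R) X Y yhat g (s : Xt -> 'I_C -> R)
  (z : bool) (t : R) : R :=
  fine (P ([set w | s (X w) (Y w) <= t] `&` evY' X Y yhat g z))
  / pz P X Y yhat g z.

End Conformal.

Notation evY R := (@evY' R _ _ _ _ _ _).

(* Main.v *)
Require Import Defs.
From HB Require Import structures.
From mathcomp Require Import all_boot all_order all_algebra.
From mathcomp Require Import all_classical all_reals all_analysis.
From mathcomp Require Import ring lra.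
Import Order.TTheory GRing.Theory Num.Theory.
Import numFieldNormedType.Exports.
Local Open Scope classical_set_scope.
Local Open Scope ring_scope.

Lemma events (R : realType) (d dX : measure_display)
  (Omega : measurableType d) (Xt : measurableType dX) (C G : nat)
  (X : Omega -> Xt) (Y : Omega -> 'I_C)
  (yhat : Xt -> 'I_C) (g : 'I_C -> 'I_G) (s : Xt -> 'I_C -> R) (lam t : R) :
  [set w | slam s yhat g lam (X w) (Y w) <= t] =
  ([set w | s (X w) (Y w) <= t] `&` evY R X Y yhat g false) `|`
  ([set w | s (X w) (Y w) <= t - lam] `&` evY R X Y yhat g true).
Proof.
apply/funext => w; apply/propext; rewrite /slam /evY' /gdist /=.
case: ifP => _; rewrite ?oner_eq0 ?eqxx /= ?mulr1 ?mulr0 ?addr0 lerBrDr.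
- by split=> [h|[[]//|[]//]]; right.
- by split=> [h|[[]//|[]//]]; left.
Qed.

Lemma evYC (R : realType) (d dX : measure_display)
  (Omega : measurableType d) (Xt : measurableType dX) (C G : nat)
  (X : Omega -> Xt) (Y : Omega -> 'I_C)
  (yhat : Xt -> 'I_C) (g : 'I_C -> 'I_G) :
  evY R X Y yhat g true = ~` evY R X Y yhat g false.
Proof.
apply/funext => w; apply/propext; rewrite /evY' /=.
by case: (_ != 0); split.
Qed.
Lemma keyFTC (R : realType) (f : R -> R) (F : R -> R) (c : R) :
  (lebesgue_measure : measure _ R).-integrable setT (EFin \o f) ->
  (forall t, (F t)%:E = (\int[lebesgue_measure]_(u in `]-oo, t]) (f u)%:E)%E) ->
  {for c, continuous f} ->
  {for c, continuous (fun t => if t == c then f c else (F t - F c) / (t - c))}.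
Proof.
move=> intf FE fc.
have FE' : F = fun y => (\int[lebesgue_measure]_(t in [set` `]-oo, y]]) (f t))%R.
  apply/funext => y; rewrite /Rintegral -FE //.
have c1 : c < c + 1 by rewrite ltrDl.
have ic : (lebesgue_measure : measure _ R).-integrable `]-oo, c + 1] (EFin \o f).
  by apply: integrableS intf.
have [] := @continuous_FTC1 R f (BInfty _ true) c (c + 1) c1 ic (ltNyr _) fc.
rewrite -FE' => dF dFE.
apply/continuous_withinNshiftx.
rewrite eqxx.
have H := cvgP _ dF; rewrite -dFE derive1E.
apply: cvg_trans H; apply: near_eq_cvg; near=> h.
have h0 : h != 0 by near: h; exact: nbhs_dnbhs_neq.
rewrite /= (_ : (h + c == c) = false); last by apply/negbTE; rewrite -subr_eq0 addrK.
by rewrite addrK /GRing.scale /= mulr1 mulrC.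
Unshelve. all: by end_near. Qed.

Theorem mainTheorem7 (R : realType) (d dX : measure_display)
  (Omega : measurableType d) (Xt : measurableType dX) (C G : nat)
  (P : probability Omega R) (X : Omega -> Xt) (Y : Omega -> 'I_C)
  (yhat : Xt -> 'I_C) (g : 'I_C -> 'I_G) (s : Xt -> 'I_C -> R)
  (alpha : R) (q : R -> R) (f0 f1 : R -> R) :
  measurable_fun setT (fun w => s (X w) (Y w)) ->
  measurable (evY R X Y yhat g false) ->
  0 < pz P X Y yhat g false < 1 ->
  (lebesgue_measure : measure _ R).-integrable setT (EFin \o f0) ->
  (lebesgue_measure : measure _ R).-integrable setT (EFin \o f1) ->
  (forall t, (Fz P X Y yhat g s false t)%:E =
     (\int[lebesgue_measure]_(u in `]-oo, t]) (f0 u)%:E)%E) ->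
  (forall t, (Fz P X Y yhat g s true t)%:E =
     (\int[lebesgue_measure]_(u in `]-oo, t]) (f1 u)%:E)%E) ->
  0 < alpha < 1 ->
  (exists2 delta : R, 0 < delta & forall lam, 0 <= lam < delta ->
     fine (P [set w | slam s yhat g lam (X w) (Y w) <= q lam]) = 1 - alpha) ->
  cvg ((fun h => (q h - q 0) / h) @ 0^'+) ->
  {for q 0, continuous f0} -> {for q 0, continuous f1} ->
  0 < pz P X Y yhat g false * f0 (q 0) + pz P X Y yhat g true * f1 (q 0) ->
  lim ((fun h => (q h - q 0) / h) @ 0^'+) =
    pz P X Y yhat g true * f1 (q 0) /
    (pz P X Y yhat g false * f0 (q 0) + pz P X Y yhat g true * f1 (q 0)).
Proof.
move=> ms mE0 /andP[p0gt0 p0lt1] i0 i1 F0E F1E _ [delta d0 qE] qcvg fc0 fc1 Sgt0.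
set E0 := evY R X Y yhat g false in mE0 *.
set E1 := evY R X Y yhat g true.
set p0 := pz P X Y yhat g false in p0gt0 p0lt1 Sgt0 *.
set p1 := pz P X Y yhat g true in Sgt0 *.
set F0 := Fz P X Y yhat g s false in F0E *.
set F1 := Fz P X Y yhat g s true in F1E *.
set L := lim _.
have mE1 : measurable E1 by rewrite /E1 evYC; exact: measurableC.
have mA : forall t, measurable [set w | s (X w) (Y w) <= t].
  move=> t; have := @measurable_fun_le _ _ _ setT _ (fun _ => t) measurableT ms (measurable_cst t).
  by rewrite setTI.
have finP : forall A, measurable A -> P A = (fine (P A))%:E.
  by move=> A mA'; rewrite fineK // fin_num_measure.
have p1E : p1 = 1 - p0.
  by rewrite /p1 /pz /E1 evYC probability_setC // (finP _ mE0).
have p1gt0 : 0 < p1 by rewrite p1E subr_gt0.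
have PF0 : forall t, fine (P ([set w | s (X w) (Y w) <= t] `&` E0)) = p0 * F0 t.
  by move=> t; rewrite /F0 /Fz -/E0 -/p0 mulrC divfK // gt_eqF.
have PF1 : forall t, fine (P ([set w | s (X w) (Y w) <= t] `&` E1)) = p1 * F1 t.
  by move=> t; rewrite /F1 /Fz -/E1 -/p1 mulrC divfK // gt_eqF.
have GE : forall lam, 0 <= lam < delta ->
    p0 * F0 (q lam) + p1 * F1 (q lam - lam) = 1 - alpha.
  move=> lam hl; rewrite -(qE lam hl) events -/E0 -/E1 measureU.
  - rewrite fineD ?inE ?fin_num_measure //; try exact: measurableI.
    by rewrite PF0 PF1.
  - exact: measurableI.
  - exact: measurableI.
  - rewrite /E1 evYC; apply/seteqP; split => w //= [[_ ?] [_ ?]]; by [].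
have FF : ProperFilter ((0:R)^'+) by typeclasses eauto.
have Lcvg : (fun h => (q h - q 0) / h) @ 0^'+ --> L := cvgP _ qcvg.
have hcvg : (fun h : R => h) @ 0^'+ --> (0:R) := cvg_at_right_filter cvg_id.
have qc : q h @[h --> 0^'+] --> q 0.
  have H : (fun h => q 0 + h * ((q h - q 0) / h)) @ 0^'+ --> q 0 + 0 * L.
    exact: cvgD (cvg_cst _) (cvgM hcvg Lcvg).
  rewrite mul0r addr0 in H; apply: cvg_trans H; apply: near_eq_cvg; near=> h.
  have hp : 0 < h by near: h; exact: nbhs_right_gt.
  by rewrite mulrC divfK ?gt_eqF // addrC subrK.
have q1c : (q h - h) @[h --> 0^'+] --> q 0.
  have H := cvgB qc hcvg; rewrite subr0 in H; exact: H.
pose phi0 t := if t == q 0 then f0 (q 0) else (F0 t - F0 (q 0)) / (t - q 0).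
pose phi1 t := if t == q 0 then f1 (q 0) else (F1 t - F1 (q 0)) / (t - q 0).
have c0 : (phi0 \o q) @ 0^'+ --> f0 (q 0).
  have := @continuous_cvg _ _ _ _ _ q phi0 (q 0) (@keyFTC R f0 F0 (q 0) i0 F0E fc0) qc; rewrite /phi0 /phi1 /= eqxx => H; apply: H; typeclasses eauto.
have c1 : (phi1 \o (fun h => q h - h)) @ 0^'+ --> f1 (q 0).
  have := @continuous_cvg _ _ _ _ _ (fun h => q h - h) phi1 (q 0) (@keyFTC R f1 F1 (q 0) i1 F1E fc1) q1c; rewrite /phi0 /phi1 /= eqxx => H; apply: H; typeclasses eauto.
have id0 : forall t, (t - q 0) * phi0 t = F0 t - F0 (q 0).
  move=> t; rewrite /phi0; case: eqP => [->|/eqP ne]; first by rewrite !subrr mul0r.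
  by rewrite mulrC divfK // subr_eq0.
have id1 : forall t, (t - q 0) * phi1 t = F1 t - F1 (q 0).
  move=> t; rewrite /phi1; case: eqP => [->|/eqP ne]; first by rewrite !subrr mul0r.
  by rewrite mulrC divfK // subr_eq0.
pose K h := p0 * ((q h - q 0) / h) * phi0 (q h) + p1 * ((q h - q 0) / h - 1) * phi1 (q h - h).
have lim1 : K @ 0^'+ --> p0 * L * f0 (q 0) + p1 * (L - 1) * f1 (q 0).
  have a1 := cvgM (cvgM (cvg_cst p0) Lcvg) c0.
  have a2 := cvgM (cvgM (cvg_cst p1) (cvgB Lcvg (cvg_cst (1:R)))) c1.
  have a3 := cvgD (a1 FF FF FF) (a2 FF FF FF FF FF).
  exact: a3.
have lim2 : K @ 0^'+ --> (0:R).
  apply: cvg_trans (@cvg_cst _ (0:R) _ _ FF); apply: (@near_eq_cvg _ _ _ FF); near=> h.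
  have hp : 0 < h by near: h; exact: nbhs_right_gt.
  have hd : h < delta by near: h; exact: nbhs_right_lt.
  have h0 : h != 0 by rewrite gt_eqF.
  apply: (mulfI h0); rewrite mulr0.
  have -> : h * K h = p0 * ((q h - q 0) * phi0 (q h)) + p1 * ((q h - h - q 0) * phi1 (q h - h)).
    by rewrite /K; field.
  rewrite id0 id1.
  have -> : p0 * (F0 (q h) - F0 (q 0)) + p1 * (F1 (q h - h) - F1 (q 0)) =
     (p0 * F0 (q h) + p1 * F1 (q h - h)) - (p0 * F0 (q 0) + p1 * F1 (q 0 - 0)).
    by rewrite subr0; ring.
  by rewrite !GE ?subrr // ?lexx ?d0 ?(ltW hp) ?hd.
have Z := cvg_unique _ lim1 lim2.
have S0 : p0 * f0 (q 0) + p1 * f1 (q 0) != 0 by rewrite gt_eqF.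
rewrite -[L](mulfK S0); congr (_ / _).
apply/eqP; rewrite -subr_eq0; apply/eqP.
have -> : L * (p0 * f0 (q 0) + p1 * f1 (q 0)) - p1 * f1 (q 0) = p0 * L * f0 (q 0) + p1 * (L - 1) * f1 (q 0) by ring.
exact: Z.
Unshelve. all: by end_near. Qed.
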